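(* Let $\mathcal{M}=(E,\mathcal{I})$ be a loopless matroid with $n=|E|$ elements and rank $r\geq 1$ that is uniformly dense. Let $1\leq j\leq n$ and let $(x_1,\dots,x_j)$ be a sequence of $j$ distinct elements of $E$ chosen uniformly at random among all such sequences. Then the probability that $x_j$ is selected by the greedy procedure run on the sequence $(x_1,\dots,x_j)$ is at least $1-(j-1)/r$.
   Context: For a loopless matroid $\mathcal{M}=(E,\mathcal{I})$ with rank function $r(\cdot)$, its density is $\gamma(\mathcal{M})=\max_{\emptyset\neq X\subseteq E}|X|/r(X)$. The matroid is uniformly dense if $|X|/r(X)\leq |E|/r(E)$ for every non-empty $X\subseteq E$. The greedy procedure on a sequence of elements processes them in order and selects an element if and only if it can be added to the previously selected elements while keeping the selected set independent. *)

(* Defs.v *)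
From mathcomp Require Import all_boot all_order all_algebra.
Set Implicit Arguments. Unset Strict Implicit. Unset Printing Implicit Defensive.
Import GRing.Theory Num.Theory.

(* A matroid on the finite ground set E (the whole finType), given by its
   independent sets. *)
Record matroid (E : finType) := Matroid {
  indep : pred {set E};
  indep0 : indep set0;
  indep_sub : forall A B : {set E}, B \subset A -> indep A -> indep B;
  indep_aug : forall A B : {set E}, indep A -> indep B -> #|A| < #|B| ->
     exists2 x, x \in B :\: A & indep (x |: A)
}.

Section M.
Variables (E : finType) (M : matroid E).

Definition mrank (X : {set E}) : nat :=
  \max_(A : {set E} | (A \subset X) && indep M A) #|A|.

Definition loopless : Prop := forall x : E, indep M [set x].

Definition uniformly_dense : Prop :=
  forall X : {set E}, X != set0 ->
    ((#|X|%:R / (mrank X)%:R) <= (#|E|%:R / (mrank setT)%:R) :> rat)%R.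

Definition greedy (s : seq E) : {set E} :=
  foldl (fun S x => if indep M (x |: S) then x |: S else S) set0 s.

End M.

(* Main.v *)
Require Import Defs.
From mathcomp Require Import all_boot all_order all_algebra.
From mathcomp Require Import zify.
Import GRing.Theory Num.Theory.

Section G.
Variables (E : finType) (M : matroid E).

Definition step (S : {set E}) (x : E) := if indep M (x |: S) then x |: S else S.

Lemma F_sup (S : {set E}) (s : seq E) : S \subset foldl step S s.
Proof.
elim: s S => [|x s IH] S /=; first exact: subxx.
apply: subset_trans (IH _); rewrite /step; case: ifP => _ //; exact: subsetUr.
Qed.

Lemma F_sub (S : {set E}) (s : seq E) : foldl step S s \subset S :|: [set x in s].
Proof.
elim: s S => [|x s IH] S /=; first exact: subsetUl.
apply: subset_trans (IH _) _; apply/subsetP => y; rewrite /step !inE.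
case: ifP => _; rewrite ?inE.
  by case/orP => [/orP[]|] ->; rewrite ?orbT.
by case/orP => ->; rewrite ?orbT.
Qed.

Lemma F_indep (S : {set E}) (s : seq E) : indep M S -> indep M (foldl step S s).
Proof.
elim: s S => [|x s IH] S //= HS; apply: IH; rewrite /step; case: ifP => //.
Qed.

Lemma dep_mono (S S' : {set E}) y : S \subset S' -> ~~ indep M (y |: S) -> ~~ indep M (y |: S').
Proof.
move=> sub; apply: contra => H; apply: indep_sub H; exact: setUS.
Qed.

Lemma F_span (S : {set E}) (s : seq E) y : y \in s -> (y \in foldl step S s) || ~~ indep M (y |: foldl step S s).
Proof.
elim: s S => [|x s IH] S //=; rewrite inE; case/orP => [/eqP -> | ys]; last exact: IH.
rewrite /step; case: ifP => H.
  by rewrite (subsetP (F_sup _ _)) // setU11.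
by rewrite (@dep_mono _ _ _ (F_sup S s)) ?H ?orbT.
Qed.

Lemma greedyE (s : seq E) : greedy M s = foldl step set0 s.
Proof. by []. Qed.


Lemma greedy_sub0 (s : seq E) : greedy M s \subset [set x in s].
Proof. by rewrite greedyE; apply: subset_trans (F_sub _ _) _; rewrite set0U. Qed.

Lemma greedy_last (s : seq E) x : x \notin s ->
  (x \in greedy M (rcons s x)) = indep M (x |: greedy M s).
Proof.
move=> xs; rewrite !greedyE foldl_rcons -greedyE /step.
case: ifP => H; first by rewrite setU11.
apply/negP => /(subsetP (greedy_sub0 s)); rewrite inE; exact/negP.
Qed.

Lemma per_s (s : seq E) :
  loopless M -> (1 <= mrank M setT)%N -> uniformly_dense M -> uniq s ->
  (mrank M setT * #|[pred x | (x \notin s) && ~~ indep M (x |: greedy M s)]|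
     <= size s * (#|E| - size s))%N.
Proof.
move=> ll r1 ud us.
set G := greedy M s.
set C := [set y | (y \in G) || ~~ indep M (y |: G)].
set P := [set x in s].
have PC : P \subset C.
  apply/subsetP => y; rewrite !inE => ys; exact: F_span.
have cP : #|P| = size s by rewrite cardsE; apply/card_uniqP.
have GP : G \subset P := greedy_sub0 s.
have iG : indep M G by apply: F_indep; exact: indep0.
have mk : (#|G| <= size s)%N by rewrite -cP; exact: subset_leq_card.
have mr : (#|G| <= mrank M setT)%N.
  rewrite /mrank; apply: (@leq_bigmax_cond _ (fun A : {set E} => (A \subset setT) && indep M A) (fun A => #|A|) G).
  by rewrite subsetT.
have rC : (mrank M C <= #|G|)%N.
  apply/bigmax_leqP => A /andP[AC iA]; rewrite leqNgt; apply/negP => lt.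
  have [x] := indep_aug iG iA lt.
  rewrite inE => /andP[xG xA] ixG.
  have := subsetP AC x xA; rewrite inE (negbTE xG) /= ixG //.
have bad : (#|[pred x | (x \notin s) && ~~ indep M (x |: G)]| <= #|C| - size s)%N.
  rewrite -cP -(cardsDS PC); apply: subset_leq_card; apply/subsetP => x.
  rewrite !inE => /andP[xs ->]; rewrite orbT andbT; exact: xs.
have nE : (size s <= #|E|)%N by rewrite -cP; apply: max_card.
have cE : (#|C| <= #|E|)%N by apply: max_card.
case: (set_0Vmem C) => [C0|[y yC]].
  move: bad; rewrite C0 cards0 sub0n leqn0 => /eqP ->; by rewrite muln0.
have rC1 : (1 <= mrank M C)%N.
  have := @leq_bigmax_cond _ (fun A : {set E} => (A \subset C) && indep M A) (fun A => #|A|) [set y].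
  rewrite cards1; apply; rewrite sub1set yC; exact: ll.
have C0 : C != set0 by apply/set0Pn; exists y.
have D := ud C C0.
rewrite ler_pdivrMr ?ltr0n // mulrAC ler_pdivlMr ?ltr0n // -!natrM ler_nat in D.
set r := mrank M setT in mr D r1 *.
set m := #|G| in mk mr rC.
set c := #|C| in bad cE D.
set b := #|_| in bad *.
set k := size s in mk nE bad *.
have D' : (c * r <= #|E| * m)%N by apply: leq_trans D _; rewrite leq_mul2l rC orbT.
clear -D' bad mk mr nE cE r1.
nia.
Qed.

End G.

From mathcomp Require Import ring.

Lemma ratstep (r k N Gd : nat) : (0 < r)%N -> (0 < N)%N ->
  (r * N <= r * Gd + k * N)%N ->
  ((1 - k%:R / r%:R) <= Gd%:R / N%:R :> rat)%R.
Proof.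
move=> r0 N0 H.
rewrite ler_pdivlMr ?ltr0n // -(ler_pM2l (_ : (0 < r%:R :> rat)%R)) ?ltr0n //.
have rn : (r%:R != 0 :> rat)%R by rewrite pnatr_eq0 -lt0n.
have -> : (r%:R * ((1 - k%:R / r%:R) * N%:R) = r%:R * N%:R - k%:R * N%:R :> rat)%R.
  by field.
by rewrite lerBlDr -!natrM -natrD ler_nat.
Qed.

Theorem lemma1 (E : finType) (M : matroid E) (k : nat) :
  loopless M -> (1 <= mrank M setT)%N -> uniformly_dense M ->
  (k.+1 <= #|E|)%N ->
  ((1 - k%:R / (mrank M setT)%:R) <=
    #|[pred t : (k.+1).-tuple E | uniq t && (tnth t ord_max \in greedy M t)]|%:R
    / #|[pred t : (k.+1).-tuple E | uniq t]|%:R :> rat)%R.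
Proof.
move=> ll r1 ud kn.
pose h := fun p : k.-tuple E * E => rcons_tuple p.1 p.2.
pose h' := fun t : (k.+1).-tuple E =>
  ([tuple of belast (thead t) (behead t)], last (thead t) (behead t)).
have eta (t : (k.+1).-tuple E) : thead t :: behead t = t.
  by case/tupleP: t => x t; rewrite theadE.
have hK : cancel h' h.
  by move=> t; apply: val_inj; rewrite /= -lastI eta.
have h'K : cancel h h'.
  move=> [s x]; have := lastI (thead (h (s, x))) (behead (h (s, x))).
  rewrite eta /= => /rcons_inj; case => e1 e2.
  by rewrite /h'; congr pair; [apply: val_inj => /=; exact: esym e1 | exact: esym e2].
have hb : {on [pred t | true], bijective h} by exists h' => ? _.
set N := (\sum_(s : k.-tuple E | uniq s) #|[pred x | x \notin s]|)%N.
set Gd := (\sum_(s : k.-tuple E | uniq s)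
   #|[pred x | (x \notin s) && indep M (x |: greedy M s)]|)%N.
have cN : #|[pred t : (k.+1).-tuple E | uniq t]| = N.
  rewrite -sum1_card (reindex h); last by exists h' => ? _.
  rewrite /N; under [RHS]eq_bigr => s _ do rewrite -sum1_card.
  rewrite pair_big_dep; apply: eq_bigl => -[s x] /=; rewrite !inE rcons_uniq andbC.
  done.
have cG : #|[pred t : (k.+1).-tuple E | uniq t && (tnth t ord_max \in greedy M t)]| = Gd.
  rewrite -sum1_card (reindex h); last by exists h' => ? _.
  rewrite /Gd; under [RHS]eq_bigr => s _ do rewrite -sum1_card.
  rewrite pair_big_dep; apply: eq_bigl => -[s x] /=; rewrite !inE rcons_uniq.
  rewrite (tnth_nth x) /= nth_rcons size_tuple ltnn eqxx.
  case xs: (x \in s) => /=; first by rewrite andbF.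
  by rewrite greedy_last ?xs.
have Npos : (0 < N)%N.
  rewrite -cN; apply/card_gt0P.
  have sz : size (take k.+1 (enum E)) == k.+1 by rewrite size_takel // -cardE.
  exists (Tuple sz); rewrite inE /=; apply: take_uniq; exact: enum_uniq.
rewrite cG cN; apply: ratstep => //.
have key : (mrank M setT * N <= mrank M setT * Gd + k * N)%N.
  rewrite /N /Gd !big_distrr -big_split /=; apply: leq_sum => s us.
  have := @per_s _ M s ll r1 ud us; rewrite size_tuple.
  have a1 : (#|[pred x | (x \notin s) && indep M (x |: greedy M s)]| +
     #|[pred x | (x \notin s) && ~~ indep M (x |: greedy M s)]| = #|[pred x | x \notin s]|)%N.
    rewrite -(cardID [pred x | indep M (x |: greedy M s)] [pred x | x \notin s]).
    by congr addn; apply: eq_card => x; rewrite !inE // andbC.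
  have a2 : #|[pred x | x \notin s]| = (#|E| - k)%N.
    have := cardC (mem s); rewrite (card_uniqP us) size_tuple => <-.
    by rewrite addKn; apply: eq_card => x; rewrite !inE.
  move=> b; rewrite -{1}a1 a2 mulnDr leq_add2l; exact: b.
exact: key.
Qed.
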